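(* Let $G$ be a connected simple graph with $n$ vertices and $n+1$ edges belonging to the class $\mathcal{A}(p,q,l)$ for some $p,q,l$. Then $\operatorname{avm}(G)\ge \operatorname{avm}(\theta_n^1(3,3))$, with equality if and only if $G\cong \theta_n^1(3,3)$.
   Context: For a finite simple graph $G$, $\operatorname{avm}(G)$ is the average of $|M|$ over all maximal matchings $M$ of $G$ (a matching is maximal if it is not properly contained in another matching). A connected graph with $n$ vertices and $n+1$ edges contains two induced cycles $C_p$ and $C_q$ (of lengths $p$ and $q$); it belongs to $\mathcal{A}(p,q,l)$ if these cycles have a common path of length $l\ge 1$ (so the union of the cycles is a theta graph). $\theta_n^1(3,3)$ is the graph obtained from two triangles sharing an edge $uv$ (vertices $u,v,x,y$, edges $uv,ux,uy,vx,vy$) by attaching $n-4$ pendant edges (new leaves) to $u$. *)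

(* Defs.v *)
From mathcomp Require Import all_boot all_order all_algebra.
Set Implicit Arguments. Unset Strict Implicit. Unset Printing Implicit Defensive.
Import Order.TTheory GRing.Theory Num.Theory.

Section Graph.
Variables (T : finType) (g : rel T).

Definition simple_graph : Prop := symmetric g /\ irreflexive g.

Definition connected_graph : Prop := forall x y : T, connect g x y.

Definition edges : {set {set T}} :=
  [set e | [exists x, exists y, g x y && (e == [set x; y])]].

Definition is_matching (M : {set {set T}}) : bool :=
  (M \subset edges) &&
  [forall e1 in M, forall e2 in M, (e1 != e2) ==> [disjoint e1 & e2]].

Definition maximal_matching (M : {set {set T}}) : bool :=
  is_matching M &&
  [forall N : {set {set T}}, (is_matching N && (M \subset N)) ==> (N == M)].

Definition avm : rat :=
  ((\sum_(M : {set {set T}} | maximal_matching M) #|M|)%:R /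
   (#|[set M : {set {set T}} | maximal_matching M]|)%:R)%R.

(* s is a cycle of G (as a cyclic sequence of distinct vertices, length >= 3)
   which is induced: two cycle vertices are adjacent iff consecutive. *)
Definition induced_cycle (s : seq T) : Prop :=
  [/\ uniq s, 3 <= size s, cycle g s &
      forall x y, x \in s -> y \in s -> g x y -> (y == next s x) || (y == prev s x)].

(* G belongs to A(p,q,l): two distinct induced cycles of lengths p and q whose
   common part is a path of length l >= 1. *)
Definition classA (p q l : nat) : Prop :=
  exists (s1 s2 : seq T) (x : T) (P : seq T),
    [/\ induced_cycle s1 /\ size s1 = p, induced_cycle s2 /\ size s2 = q,
        [set v in s1] != [set v in s2], 1 <= l &
        [/\ uniq (x :: P), size P = l, path g x P &
        [set v in s1] :&: [set v in s2] = [set v in x :: P]]].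

End Graph.

(* theta_n^1(3,3) on vertex set 'I_n: u = 0, v = 1, x = 2, y = 3,
   edges uv, ux, uy, vx, vy, and pendant edges u k for k >= 4. *)
Definition theta_adj (n : nat) : rel 'I_n :=
  fun i j =>
    (i != j) &&
    ((minn i j == 0) || ((minn i j == 1) && ((maxn i j == 2) || (maxn i j == 3)))).

Definition isomorphic (T U : finType) (g : rel T) (h : rel U) : Prop :=
  exists f : T -> U, bijective f /\ forall x y, h (f x) (f y) = g x y.
Arguments theta_adj n : clear implicits.

(* Main.v *)
Require Import Defs.
From mathcomp Require Import all_boot all_order all_algebra.
From mathcomp Require Import fingroup perm zify.
Import Order.TTheory GRing.Theory Num.Theory.

Set Implicit Arguments. Unset Strict Implicit. Unset Printing Implicit Defensive.

Lemma set2C' (T : finType) (x y : T) : [set x; y] = [set y; x].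
Proof. by apply/setP => z; rewrite !in_set2 orbC. Qed.

Lemma disjP (T : finType) (A B : {set T}) : reflect (forall x, x \in A -> x \in B -> False) [disjoint A & B].
Proof.
rewrite -setI_eq0; apply: (iffP eqP) => [h x xa xb| h].
  have: x \in A :&: B by rewrite inE xa xb.
  by rewrite h inE.
by apply/setP => x; rewrite inE in_set0; apply/negP => /andP [xa xb]; exact: h xa xb.
Qed.

Section Gen.
Variables (T : finType) (g : rel T).
Hypothesis gs : symmetric g.
Hypothesis gi : irreflexive g.

Lemma g_neq u v : g u v -> u != v.
Proof. by apply: contraTneq => ->; rewrite gi. Qed.

Lemma edgesP e : reflect (exists u v, g u v /\ e = [set u; v]) (e \in edges g).
Proof.
rewrite /edges inE; apply: (iffP existsP).
  by move=> [u /existsP [v /andP [h /eqP ->]]]; exists u, v.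
by move=> [u [v [h ->]]]; exists u; apply/existsP; exists v; rewrite h eqxx.
Qed.

Lemma matchingP (M : {set {set T}}) : reflect ((M \subset edges g) /\
   forall e1 e2, e1 \in M -> e2 \in M -> e1 != e2 -> [disjoint e1 & e2])
  (is_matching g M).
Proof.
rewrite /is_matching; apply: (iffP andP) => [[s /forall_inP h]|[s h]]; split => //.
  move=> e1 e2 i1 i2 ne; have /forall_inP := h e1 i1.
  by move/(_ e2 i2)/implyP; apply.
apply/forall_inP => e1 i1; apply/forall_inP => e2 i2; apply/implyP; exact: h.
Qed.

Lemma maximalP (M : {set {set T}}) : reflect (is_matching g M /\
  forall N, is_matching g N -> M \subset N -> N = M) (maximal_matching g M).
Proof.
apply: (iffP andP) => [[m /forallP h]|[m h]]; split => //.
  by move=> N mN sMN; apply/eqP; move/implyP: (h N); apply; rewrite mN.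
by apply/forallP => N; apply/implyP => /andP [mN sMN]; rewrite (h N mN sMN).
Qed.

Lemma match_common (M : {set {set T}}) (e1 e2 : {set T}) w : is_matching g M -> e1 \in M -> e2 \in M ->
  w \in e1 -> w \in e2 -> e1 = e2.
Proof.
move=> /matchingP [_ d] i1 i2 w1 w2; apply/eqP; apply/negPn/negP => ne.
by move/disjP: (d _ _ i1 i2 ne) => /(_ w w1 w2).
Qed.

Lemma max_cov (M : {set {set T}}) u v : maximal_matching g M -> g u v ->
  [exists e in M, u \in e] || [exists e in M, v \in e].
Proof.
move=> /maximalP [mM hM] huv; apply/negPn/negP; rewrite negb_or => /andP [nu nv].
have HN : is_matching g ([set u; v] |: M).
  move/matchingP: mM => [sM dM]; apply/matchingP; split.
    apply/subsetP => e; rewrite in_setU1 => /orP [/eqP ->|].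
      by apply/edgesP; exists u, v.
    exact: (subsetP sM).
  have key : forall e, e \in M -> [disjoint [set u; v] & e].
    move=> e eM; apply/disjP => w; rewrite in_set2 => /orP [] /eqP -> we.
      by move/negP: nu; apply; apply/exists_inP; exists e.
    by move/negP: nv; apply; apply/exists_inP; exists e.
  move=> e1 e2; rewrite !in_setU1 => /orP [/eqP ->|i1] /orP [/eqP ->|i2] ne.
  - by rewrite eqxx in ne.
  - exact: key.
  - rewrite disjoint_sym; exact: key.
  - exact: dM.
have eq := hM _ HN (subsetUr _ _).
have h : [set u; v] \in M by rewrite -eq in_setU1 eqxx.
by move/negP: nu; apply; apply/exists_inP; exists [set u; v] => //; rewrite in_set2 eqxx.
Qed.

Lemma exists_max : exists M, maximal_matching g M.
Proof.
have m0 : is_matching g set0.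
  by apply/matchingP; split; [exact: sub0set | move=> e1 e2; rewrite inE].
case: (arg_maxnP (fun M : {set {set T}} => #|M|) m0) => M mM Mmax.
exists M; apply/maximalP; split => // N mN sMN.
by apply/eqP; rewrite eq_sym eqEcard sMN /=; exact: Mmax.
Qed.

End Gen.

Definition nbr (T : finType) (g : rel T) a b := [set c | g a c & c != b].
Definition domP (T : finType) (g : rel T) a b :=
  g a b /\ forall u v, g u v -> [|| u == a, u == b, v == a | v == b].

Section Dom.
Variables (T : finType) (g : rel T).
Hypothesis gs : symmetric g.
Hypothesis gi : irreflexive g.

Lemma domP_sym a b : domP g a b -> domP g b a.
Proof.
case=> h1 h2; split; first by rewrite gs.
by move=> u v /h2; case/or4P => ->; rewrite ?orbT.
Qed.

Lemma nbrP a b c : c \in nbr g a b -> [/\ g a c, c != a & c != b].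
Proof.
rewrite inE => /andP [h cb]; split => //; rewrite eq_sym; exact: g_neq.
Qed.

Lemma hit_set a b e : domP g a b -> e \in edges g -> (a \in e) || (b \in e).
Proof.
case=> _ hc /edgesP [u [v [huv ->]]]; rewrite !in_set2.
by case/or4P: (hc _ _ huv) => /eqP ->; rewrite !eqxx ?orbT.
Qed.

Lemma cov_edge a b (M : {set {set T}}) : is_matching g M -> [set a; b] \notin M ->
  [exists e in M, a \in e] -> exists2 c, c \in nbr g a b & [set a; c] \in M.
Proof.
move=> /matchingP [sM _] abM /exists_inP [e eM ae].
have /edgesP [u [v [huv ev]]] := subsetP sM e eM; subst e.
rewrite in_set2 in ae; case/orP: ae => /eqP ea; subst.
  exists v => //; rewrite inE huv andTb; apply: contraNneq abM => <-; done.
exists u; last by rewrite set2C'.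
rewrite inE gs huv andTb; apply: contraNneq abM => <-; by rewrite set2C'.
Qed.

Lemma key a b (M : {set {set T}}) c : domP g a b -> 1 < #|nbr g b a| ->
  maximal_matching g M -> c \in nbr g a b -> [set a; c] \in M ->
  [exists e in M, b \in e].
Proof.
move=> hd hB mx cA acM; have mM : is_matching g M by case/maximalP: mx.
apply: contraT => nb.
have : 0 < #|nbr g b a :\ c|.
  by move: hB; rewrite (cardsD1 c (nbr g b a)); case: (c \in nbr g b a) => /= h; lia.
case/card_gt0P => d; rewrite !inE => /andP [dc /andP [gbd da]].
have := max_cov mx gbd; rewrite (negbTE nb) /= => /exists_inP [e eM de].
have /matchingP [sM _] := mM.
case/orP: (hit_set hd (subsetP sM e eM)) => [ae|be].
  have ee := match_common mM eM acM ae (set21 _ _); subst e.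
  by move: de; rewrite in_set2 (negbTE da) (negbTE dc).
by case/negP: nb; apply/exists_inP; exists e.
Qed.

End Dom.

Lemma set2_inj (T : finType) (x y y' : T) : y != x -> [set x; y] = [set x; y'] -> y = y'.
Proof.
move=> yx e; have : y \in [set x; y'] by rewrite -e set22.
by rewrite in_set2 (negbTE yx) /= => /eqP.
Qed.

Lemma notin2 (T : finType) (x u v : T) : x \in [set u; v] -> x != u -> x != v -> False.
Proof. by rewrite in_set2 => /orP [] ->. Qed.

Section Count.
Variables (T : finType) (g : rel T).
Hypothesis gs : symmetric g.
Hypothesis gi : irreflexive g.
Variables a b : T.
Hypothesis hd : domP g a b.
Hypothesis hA : 1 < #|nbr g a b|.
Hypothesis hB : 1 < #|nbr g b a|.

Let A := nbr g a b.
Let B := nbr g b a.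
Let F (cd : T * T) : {set {set T}} := [set [set a; cd.1]; [set b; cd.2]].
Let D := [set (x, x) | x in A :&: B].
Let P := setX A B :\: D.

Lemma ab_neq : a != b.
Proof. by case: hd => h _; apply: (g_neq gi). Qed.

Lemma Pmem c d : ((c, d) \in P) = [&& c \in A, d \in B & c != d].
Proof.
have HD : ((c, d) \in D) = (c == d) && (c \in A :&: B).
  apply/imsetP/andP => [[x xi [-> ->]]|[/eqP -> ci]]; first by rewrite eqxx.
  by exists d.
rewrite in_setD HD in_setX in_setI.
by case: (c =P d) => [->|ne] /=; case: (d \in A); case: (d \in B); rewrite ?andbF.
Qed.

Lemma cardP : #|P| = #|A| * #|B| - #|A :&: B|.
Proof.
rewrite cardsD cardsX; congr (_ - _).
have -> : setX A B :&: D = D.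
  apply/setIidPr/subsetP => x /imsetP [y]; rewrite in_setI => /andP [ya yb] ->.
  by rewrite in_setX ya yb.
by rewrite card_imset // => x y [].
Qed.

Lemma Fcard c d : (c, d) \in P -> #|F (c, d)| = 2.
Proof.
rewrite Pmem => /and3P [cA dB cd]; rewrite cards2 /=.
case: (nbrP gi dB) => _ _ da.
suff -> : [set a; c] != [set b; d] by [].
apply/negP => /eqP e; have : a \in [set b; d] by rewrite -e set21.
by move/notin2; apply; [exact: ab_neq | rewrite eq_sym].
Qed.

Lemma Finj : {in P &, injective F}.
Proof.
move=> [c d] [c' d']; rewrite !Pmem => /and3P [cA dB _] /and3P [cA' dB' _] e.
case: (nbrP gi cA) => _ ca cb; case: (nbrP gi dB) => _ db da.
case: (nbrP gi cA') => _ ca' cb'; case: (nbrP gi dB') => _ db' da'.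
have h1 : [set a; c] \in F (c', d') by rewrite -e set21.
have h2 : [set b; d] \in F (c', d') by rewrite -e set22.
rewrite /F /= !in_set2 in h1 h2.
case/orP: h1 => /eqP h1.
  have -> := set2_inj ca h1.
  case/orP: h2 => /eqP h2.
    have : b \in [set a; c'] by rewrite -h2 set21.
    by move/notin2; case; [rewrite eq_sym ab_neq | rewrite eq_sym].
  by rewrite (set2_inj db h2).
have : a \in [set b; d'] by rewrite -h1 set21.
by move/notin2; case; [exact: ab_neq | rewrite eq_sym].
Qed.

Lemma max_ab : maximal_matching g [set [set a; b]].
Proof.
apply/maximalP; split.
  apply/matchingP; split.
    by apply/subsetP => e; rewrite inE => /eqP ->; apply/edgesP; exists a, b; case: hd.
  by move=> e1 e2; rewrite !inE => /eqP -> /eqP ->; rewrite eqxx.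
move=> N mN sub; have abN : [set a; b] \in N by apply: (subsetP sub); rewrite inE.
apply/eqP; rewrite eqEsubset sub andbT; apply/subsetP => e eN; rewrite inE.
have /matchingP [sN _] := mN.
case/orP: (hit_set hd (subsetP sN e eN)) => h.
  by rewrite (match_common mN eN abN h (set21 _ _)).
by rewrite (match_common mN eN abN h (set22 _ _)).
Qed.

Lemma max_F c d : (c, d) \in P -> maximal_matching g (F (c, d)).
Proof.
rewrite Pmem => /and3P [cA dB cd].
case: (nbrP gi cA) => gac ca cb; case: (nbrP gi dB) => gbd db da.
have mF : is_matching g (F (c, d)).
  apply/matchingP; split.
    apply/subsetP => e; rewrite /F /= in_set2 => /orP [] /eqP ->; apply/edgesP.
      by exists a, c.
    by exists b, d.
  have dj : [disjoint [set a; c] & [set b; d]].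
    apply/disjP => x; rewrite !in_set2 => /orP [] /eqP -> /orP [] /eqP e.
    - by move: ab_neq; rewrite e eqxx.
    - by move: da; rewrite e eqxx.
    - by move: cb; rewrite e eqxx.
    - by move: cd; rewrite e eqxx.
  move=> e1 e2; rewrite /F /= !in_set2 => /orP [] /eqP -> /orP [] /eqP -> //;
    rewrite ?eqxx // => _; by rewrite disjoint_sym.
apply/maximalP; split => // N mN sub.
have acN : [set a; c] \in N by apply: (subsetP sub); rewrite /F /= set21.
have bdN : [set b; d] \in N by apply: (subsetP sub); rewrite /F /= set22.
apply/eqP; rewrite eqEsubset sub andbT; apply/subsetP => e eN.
have /matchingP [sN _] := mN.
case/orP: (hit_set hd (subsetP sN e eN)) => h.
  by rewrite (match_common mN eN acN h (set21 _ _)) /F /= set21.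
by rewrite (match_common mN eN bdN h (set21 _ _)) /F /= set22.
Qed.

Lemma max_char M : maximal_matching g M ->
  M = [set [set a; b]] \/ exists2 cd, cd \in P & M = F cd.
Proof.
move=> mx; have mM : is_matching g M by case/maximalP: mx.
have /matchingP [sM _] := mM.
case abM: ([set a; b] \in M).
  left; apply/eqP; rewrite eqEsubset; apply/andP; split.
    apply/subsetP => e eM; rewrite inE; apply/eqP.
    case/orP: (hit_set hd (subsetP sM e eM)) => h.
      exact: match_common mM eM abM h (set21 _ _).
    exact: match_common mM eM abM h (set22 _ _).
  by apply/subsetP => e; rewrite inE => /eqP ->.
right.
have abM' : [set a; b] \notin M by rewrite abM.
have hd' := domP_sym gs hd.
have ba' : [set b; a] \notin M by rewrite set2C'.
have [[c cA acM] [d dB bdM]] : (exists2 c, c \in A & [set a; c] \in M) /\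
   (exists2 d, d \in B & [set b; d] \in M).
  have abg : g a b by case: hd.
  case/orP: (max_cov mx abg) => [ca|cb].
    have [c cA acM] := cov_edge gs mM abM' ca.
    split; first by exists c.
    have kb := key hd hB mx cA acM.
    have := cov_edge gs mM ba' kb.
    exact.
  have [d dB bdM] := cov_edge gs mM ba' cb.
  split; last by exists d.
  have ka := key hd' hA mx dB bdM.
  have := cov_edge gs mM abM' ka.
  exact.
case: (nbrP gi cA) => _ ca cb; case: (nbrP gi dB) => _ db da.
exists (c, d).
  rewrite Pmem cA dB /=; apply/eqP => ecd; subst d.
  have ee := match_common mM acM bdM (set22 _ _) (set22 _ _).
  have : a \in [set b; c] by rewrite -ee set21.
  by move/notin2; apply; [exact: ab_neq | rewrite eq_sym].
apply/eqP; rewrite eqEsubset; apply/andP; split.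
  apply/subsetP => e eM.
  case/orP: (hit_set hd (subsetP sM e eM)) => h.
    by rewrite (match_common mM eM acM h (set21 _ _)) /F /= set21.
  by rewrite (match_common mM eM bdM h (set21 _ _)) /F /= set22.
by apply/subsetP => e; rewrite /F /= in_set2 => /orP [] /eqP ->.
Qed.

Lemma count_max : #|[set M | maximal_matching g M]| = #|P|.+1 /\
  \sum_(M | maximal_matching g M) #|M| = 2 * #|P| + 1.
Proof.
have MMeq : [set M | maximal_matching g M] = [set [set a; b]] |: [set F cd | cd in P].
  apply/setP => M; rewrite inE in_setU1; apply/idP/idP.
    move=> /max_char [->|[cd cdP ->]]; first by rewrite eqxx.
    by rewrite (imset_f _ cdP) orbT.
  case/orP => [/eqP -> | /imsetP [[c d] cdP ->]]; [exact: max_ab | exact: max_F].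
have notin : [set [set a; b]] \notin [set F cd | cd in P].
  apply/imsetP => [[[c d] cdP e]].
  have : [set a; c] \in [set [set a; b]] by rewrite e /F /= set21.
  rewrite inE => /eqP h.
  move: cdP; rewrite Pmem => /and3P [cA _ _]; case: (nbrP gi cA) => _ ca cb.
  by move: cb; rewrite (set2_inj ca h) eqxx.
split.
  by rewrite MMeq cardsU1 notin (card_in_imset Finj).
rewrite (eq_bigl (fun M => M \in [set M | maximal_matching g M])); last first.
  by move=> M; rewrite inE.
rewrite MMeq big_setU1 //= (big_imset _ Finj) /= cards1.
rewrite (eq_bigr (fun _ => 2)); last by move=> [c d] cdP; exact: Fcard.
by rewrite sum_nat_const addnC mulnC.
Qed.

End Count.

Definition Kd (T : finType) (g : rel T) a b :=
  #|nbr g a b| * #|nbr g b a| - #|nbr g a b :&: nbr g b a|.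

Lemma avm_dom (T : finType) (g : rel T) a b : symmetric g -> irreflexive g ->
  domP g a b -> 1 < #|nbr g a b| -> 1 < #|nbr g b a| ->
  avm g = ((2 * Kd g a b + 1)%:R / (Kd g a b).+1%:R)%R.
Proof.
move=> gs gi hd hA hB; rewrite /avm.
have [h1 h2] := count_max gs gi hd hA hB.
by rewrite h2 h1 cardP.
Qed.

Section Struct.
Variables (T : finType) (g : rel T).
Hypothesis gs : symmetric g.
Hypothesis gi : irreflexive g.
Hypothesis conn : connected_graph g.
Hypothesis hE : #|edges g| = #|T|.+1.
Variables a b : T.
Hypothesis hd : domP g a b.

Let A := nbr g a b.
Let B := nbr g b a.

Lemma struct_cards : [/\ #|A| + #|B| = #|T|, #|A :&: B| = 2 & A :|: B = ~: [set a; b]].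
Proof.
have abn : a != b by case: hd => h _; exact: (g_neq gi h).
have Eeq : edges g = [set a; b] |: ([set [set a; c] | c in A] :|: [set [set b; d] | d in B]).
  apply/setP => e; rewrite in_setU1 in_setU; apply/idP/idP.
    move=> eE; have /edgesP [u [v [huv ee]]] := eE; subst e.
    have [x [y [gxy [exy xab]]]] : exists x y, [/\ g x y, [set u; v] = [set x; y] & (x == a) || (x == b)].
      case: hd => _ /(_ _ _ huv) /or4P [] h.
      - by exists u, v; rewrite h.
      - by exists u, v; rewrite h orbT.
      - by exists v, u; rewrite gs set2C' h.
      - by exists v, u; rewrite gs set2C' h orbT.
    rewrite exy; case/orP: xab => /eqP ex; subst x.
      case: (y =P b) => [->|yb]; first by rewrite eqxx.
      by rewrite (imset_f (fun c => [set a; c])) ?orbT // inE gxy; apply/eqP.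
    case: (y =P a) => [->|ya]; first by rewrite set2C' eqxx.
    by rewrite (imset_f (fun d => [set b; d])) ?orbT // inE gxy; apply/eqP.
  case/or3P => [/eqP -> | /imsetP [c cA ->] | /imsetP [d dB ->]]; apply/edgesP.
  - by exists a, b; case: hd.
  - by exists a, c; case: (nbrP gi cA).
  - by exists b, d; case: (nbrP gi dB).
have injA : {in A &, injective (fun c => [set a; c])}.
  by move=> c c' cA _ e; apply: set2_inj e; case: (nbrP gi cA).
have injB : {in B &, injective (fun d => [set b; d])}.
  by move=> c c' cA _ e; apply: set2_inj e; case: (nbrP gi cA).
have dj : [set [set a; c] | c in A] :&: [set [set b; d] | d in B] = set0.
  apply/eqP; rewrite setI_eq0; apply/disjP => e /imsetP [c cA ->] /imsetP [d dB e'].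
  have : a \in [set b; d] by rewrite -e' set21.
  by case: (nbrP gi dB) => _ _ da; move/notin2; apply => //; rewrite eq_sym.
have nab : [set a; b] \notin [set [set a; c] | c in A] :|: [set [set b; d] | d in B].
  rewrite in_setU; apply/norP; split; apply/imsetP.
    move=> [c cA e]; case: (nbrP gi cA) => _ ca cb.
    by move: cb; rewrite -(set2_inj _ e) ?eqxx // eq_sym.
  move=> [d dB e]; case: (nbrP gi dB) => _ _ da.
  have : a \in [set b; d] by rewrite -e set21.
  by move/notin2; apply => //; rewrite eq_sym.
have cE : #|edges g| = (#|A| + #|B|).+1.
  by rewrite Eeq cardsU1 nab cardsU dj cards0 (card_in_imset injA) (card_in_imset injB) subn0.
have cov : A :|: B = ~: [set a; b].
  apply/setP => c; rewrite in_setU in_setC in_set2; apply/idP/idP.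
    case/orP => /(nbrP gi) [_ ca cb]; by rewrite (negbTE ca) (negbTE cb).
  move=> /norP [ca cb]; case/connectP: (conn c a) => p.
  case: p => [/= _ ec | y p /= /andP [gcy _] _]; first by rewrite ec eqxx in ca.
  case: hd => _ /(_ _ _ gcy); rewrite (negbTE ca) (negbTE cb) /=.
  case/orP => /eqP ey; subst y.
    by rewrite !inE (gs a) gcy cb.
  by rewrite !inE (gs b) gcy ca orbT.
have s1 : #|A| + #|B| = #|T| by move: hE; rewrite cE => -[].
split => //.
have h2 := cardsC [set a; b]; rewrite -cov cards2 abn in h2.
have h3 := cardsU A B.
have h4 : #|A :&: B| <= #|A| by apply: subset_leq_card; apply: subsetIl.
lia.
Qed.

End Struct.

Local Open Scope ring_scope.
Lemma ratle (K0 K : nat) : (K0 <= K)%N ->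
  ((2 * K0 + 1)%:R / K0.+1%:R <= (2 * K + 1)%:R / K.+1%:R :> rat).
Proof.
move=> h; rewrite ler_pdivrMr ?ltr0n // mulrAC ler_pdivlMr ?ltr0n //.
rewrite -!natrM ler_nat; nia.
Qed.

Lemma rateq (K0 K : nat) :
  ((2 * K0 + 1)%:R / K0.+1%:R = (2 * K + 1)%:R / K.+1%:R :> rat) -> K0 = K.
Proof.
move/eqP; rewrite eqr_div ?pnatr_eq0 // -!natrM eqr_nat => /eqP; nia.
Qed.

Lemma ratlt2 (K0 : nat) : ((2 * K0 + 1)%:R / K0.+1%:R < 2%:R :> rat).
Proof.
rewrite ltr_pdivrMr ?ltr0n // -natrM ltr_nat; nia.
Qed.
Local Close Scope ring_scope.

Definition domb (T : finType) (g : rel T) a b :=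
  g a b && [forall u, forall v, g u v ==> [|| u == a, u == b, v == a | v == b]].

Lemma dombP (T : finType) (g : rel T) a b : reflect (domP g a b) (domb g a b).
Proof.
apply: (iffP andP) => [[h1 /forallP h2]|[h1 h2]]; split => //.
  by move=> u v huv; move/forallP: (h2 u) => /(_ v) /implyP; apply.
by apply/forallP => u; apply/forallP => v; apply/implyP; apply: h2.
Qed.

Section NoDom.
Variables (T : finType) (g : rel T).
Hypothesis gs : symmetric g.
Hypothesis gi : irreflexive g.
Hypothesis nd : forall a b, ~ domP g a b.
Hypothesis ne : 0 < #|edges g|.

Lemma size2 M : maximal_matching g M -> 1 < #|M|.
Proof.
move=> mx; have mM : is_matching g M by case/maximalP: mx.
have /matchingP [sM _] := mM.
case/card_gt0P: ne => e0 /edgesP [u [v [huv _]]].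
have M0 : 0 < #|M|.
  by case/orP: (max_cov mx huv) => /exists_inP [e eM _]; apply/card_gt0P; exists e.
case E: #|M| => [|[|k]] //; first by rewrite E in M0.
have /cards1P [e Me] : #|M| == 1 by rewrite E.
have eM : e \in M by rewrite Me set11.
have /edgesP [a [b [hab ee]]] := subsetP sM e eM.
exfalso; apply: (nd (a := a) (b := b)); split => // x y hxy.
have hx : forall w, [exists e in M, w \in e] -> (w == a) || (w == b).
  move=> w /exists_inP [e' e'M we']; move: e'M; rewrite Me inE => /eqP ee'.
  by move: we'; rewrite ee' ee in_set2.
by case/orP: (max_cov mx hxy) => /hx /orP [] ->; rewrite ?orbT.
Qed.

Lemma avm_ge2 : (2%:R <= avm g :> rat)%R.
Proof.
have [M0 mx0] := exists_max g.
have N0 : 0 < #|[set M | maximal_matching g M]|.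
  by apply/card_gt0P; exists M0; rewrite inE.
rewrite /avm ler_pdivlMr ?ltr0n // -natrM ler_nat.
rewrite (eq_bigl (fun M => M \in [set M | maximal_matching g M])); last first.
  by move=> M; rewrite inE.
apply: leq_trans (_ : \sum_(M in [set M | maximal_matching g M]) 2 <= _).
  by rewrite sum_nat_const mulnC.
apply: leq_sum => M; rewrite inE; exact: size2.
Qed.

End NoDom.

Lemma perm_seq (I : finType) (s t : seq I) : uniq s -> uniq t -> size s = size t ->
  exists p : {perm I}, map p s = t.
Proof.
elim: s t => [|x s IH] [|y t] //=.
  by move=> _ _ _; exists 1%g.
move=> /andP [xs us] /andP [yt ut] [sz]; have [p hp] := IH t us ut sz.
exists (p * tperm y (p x))%g; rewrite permM tpermR; congr (_ :: _).
rewrite -hp; apply/eq_in_map => z zs; rewrite permM tpermD //.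
  by apply: contraNneq yt => ->; rewrite -hp map_f.
rewrite (inj_eq perm_inj); by apply: contraNneq xs => ->.
Qed.

Section EC.
Variables (T : finType) (g : rel T).
Hypothesis gs : symmetric g.
Hypothesis gi : irreflexive g.

Lemma EC a b u v : domP g a b -> g u v = [|| (u == a) && (v == b), (u == b) && (v == a),
  (u == a) && (v \in nbr g a b), (v == a) && (u \in nbr g a b),
  (u == b) && (v \in nbr g b a) | (v == b) && (u \in nbr g b a)].
Proof.
move=> hd; case: (hd) => hab hc; apply/idP/idP.
  move=> huv; case/or4P: (hc _ _ huv) => /eqP e; subst.
  - case: (v =P b) => [->|vb]; first by rewrite !eqxx.
    have vA : v \in nbr g a b by rewrite inE huv; apply/eqP.
    by rewrite eqxx vA /= !orbT.
  - case: (v =P a) => [->|va]; first by rewrite !eqxx /= orbT.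
    have vB : v \in nbr g b a by rewrite inE huv; apply/eqP.
    by rewrite eqxx vB /= !orbT.
  - case: (u =P b) => [->|ub]; first by rewrite !eqxx /= orbT.
    have uA : u \in nbr g a b by rewrite inE gs huv; apply/eqP.
    by rewrite eqxx uA /= !orbT.
  - case: (u =P a) => [->|ua]; first by rewrite !eqxx.
    have uB : u \in nbr g b a by rewrite inE gs huv; apply/eqP.
    by rewrite eqxx uB /= !orbT.
case/orP => [|/orP [|/orP [|/orP [|/orP []]]]] /andP [/eqP -> H].
- by rewrite (eqP H).
- by rewrite (eqP H) gs.
- by case: (nbrP gi H).
- by rewrite gs; case: (nbrP gi H).
- by case: (nbrP gi H).
- by rewrite gs; case: (nbrP gi H).
Qed.

End EC.

Lemma transfer (T U : finType) (g : rel T) (h : rel U) a b a' b' (f : T -> U) :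
  symmetric g -> irreflexive g -> symmetric h -> irreflexive h ->
  injective f -> domP g a b -> domP h a' b' -> f a = a' -> f b = b' ->
  (forall u, (f u \in nbr h a' b') = (u \in nbr g a b)) ->
  (forall u, (f u \in nbr h b' a') = (u \in nbr g b a)) ->
  forall u v, h (f u) (f v) = g u v.
Proof.
move=> gs gi hs hi finj hd hd' fa fb HA HB u v.
by rewrite (EC hs hi _ _ hd') (EC gs gi _ _ hd) !HA !HB -fa -fb !(inj_eq finj).
Qed.

Section Theta.
Variable n : nat.
Hypothesis Hn : 3 < n.
Variables i0 i1 i2 i3 : 'I_n.
Hypotheses (v0 : val i0 = 0) (v1 : val i1 = 1) (v2 : val i2 = 2) (v3 : val i3 = 3).

Lemma th_eq (i j : 'I_n) : (i == j) = (val i == val j).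
Proof. by []. Qed.

Lemma th_unfold (i j : 'I_n) : theta_adj n i j = (val i != val j) &&
  ((minn (val i) (val j) == 0) || ((minn (val i) (val j) == 1) &&
   ((maxn (val i) (val j) == 2) || (maxn (val i) (val j) == 3)))).
Proof. by []. Qed.

Lemma th_sym : symmetric (theta_adj n).
Proof. by move=> i j; rewrite !th_unfold eq_sym minnC maxnC. Qed.

Lemma th_irr : irreflexive (theta_adj n).
Proof. by move=> i; rewrite th_unfold eqxx. Qed.

Lemma th_dom : domP (theta_adj n) i0 i1.
Proof.
split; first by rewrite th_unfold v0 v1.
move=> u v; rewrite th_unfold !th_eq v0 v1 => H; lia.
Qed.

Lemma th_A c : (c \in nbr (theta_adj n) i0 i1) = (c != i0) && (c != i1).
Proof. rewrite inE th_unfold !th_eq v0 v1; apply/idP/idP => H; lia. Qed.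

Lemma th_B : nbr (theta_adj n) i1 i0 = [set i2; i3].
Proof.
apply/setP => c; rewrite inE in_set2 th_unfold !th_eq v0 v1 v2 v3.
apply/idP/idP => H; lia.
Qed.

Lemma th_Acard : #|nbr (theta_adj n) i0 i1| = n - 2.
Proof.
have -> : nbr (theta_adj n) i0 i1 = ~: [set i0; i1].
  by apply/setP => c; rewrite th_A in_setC in_set2 negb_or.
have := cardsC [set i0; i1]; rewrite card_ord cards2 th_eq v0 v1 /=; lia.
Qed.

Lemma th_Bcard : #|nbr (theta_adj n) i1 i0| = 2.
Proof. by rewrite th_B cards2 th_eq v2 v3. Qed.

Lemma th_I : #|nbr (theta_adj n) i0 i1 :&: nbr (theta_adj n) i1 i0| = 2.
Proof.
have -> : nbr (theta_adj n) i0 i1 :&: nbr (theta_adj n) i1 i0 = nbr (theta_adj n) i1 i0.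
  apply/setIidPr/subsetP => c; rewrite th_B th_A in_set2 !th_eq v0 v1 v2 v3 => H; lia.
exact: th_Bcard.
Qed.

Lemma th_avm : avm (theta_adj n) =
  ((2 * ((n - 2) * 2 - 2) + 1)%:R / ((n - 2) * 2 - 2).+1%:R)%R.
Proof.
rewrite (avm_dom th_sym th_irr th_dom); last 2 first.
- by rewrite th_Acard; lia.
- by rewrite th_Bcard.
by rewrite /Kd th_Acard th_Bcard th_I.
Qed.

End Theta.

Lemma ords n : 3 < n ->
  exists i0 i1 i2 i3 : 'I_n, [/\ val i0 = 0, val i1 = 1, val i2 = 2 & val i3 = 3].
Proof.
move=> Hn; have o0 : 0 < n by lia. have o1 : 1 < n by lia.
have o2 : 2 < n by lia.
by exists (Ordinal o0), (Ordinal o1), (Ordinal o2), (Ordinal Hn).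
Qed.

Lemma n4_nodom (T : finType) (g : rel T) : symmetric g -> irreflexive g ->
  (forall a b, ~ domP g a b) -> 0 < #|edges g| -> 3 < #|T|.
Proof.
move=> gs gi nd ne; case/card_gt0P: ne => e /edgesP [u [v [huv _]]].
have : ~~ domb g u v by apply/dombP/nd.
rewrite /domb huv /= => /forallPn [x /forallPn [y]]; rewrite negb_imply => /andP [hxy hn].
move: hn; rewrite !negb_or => /and4P [xu xv yu yv].
have U : uniq [:: u; v; x; y].
  rewrite /= !inE !negb_or (g_neq gi huv) (g_neq gi hxy) (eq_sym u x) (eq_sym u y).
  by rewrite (eq_sym v x) (eq_sym v y) xu xv yu yv.
have := card_uniqP U => /= h4.
have h5 : #|[:: u; v; x; y]| <= #|T| := max_card _.
by move: h5; rewrite h4.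
Qed.

Lemma iso_build (T : finType) (g : rel T) a b : symmetric g -> irreflexive g ->
  domP g a b -> nbr g b a \subset nbr g a b ->
  nbr g a b :|: nbr g b a = ~: [set a; b] -> #|nbr g b a| = 2 ->
  isomorphic g (theta_adj #|T|).
Proof.
move=> gs gi hd Bsub cov B2.
have hAc : forall c, (c \in nbr g a b) = (c != a) && (c != b).
  move=> c; rewrite -{1}(setUidPl Bsub) cov in_setC in_set2 negb_or //.
have /cards2P [x [y [xy Be]]] : #|nbr g b a| == 2 by rewrite B2.
have xB : x \in nbr g b a by rewrite Be set21.
have yB : y \in nbr g b a by rewrite Be set22.
case: (nbrP gi xB) => _ xb xa; case: (nbrP gi yB) => _ yb ya.
have ab : a != b by case: hd => h _; exact: (g_neq gi h).
have U : uniq [:: a; b; x; y].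
  rewrite /= !inE !negb_or ab (eq_sym a x) (eq_sym a y) (eq_sym b x) (eq_sym b y).
  by rewrite xa ya xb yb xy.
have n4 : 3 < #|T|.
  have := card_uniqP U => /= h4.
  have h5 : #|[:: a; b; x; y]| <= #|T| := max_card _.
  by move: h5; rewrite h4.
have [i0 [i1 [i2 [i3 [v0 v1 v2 v3]]]]] := ords n4.
have U' : uniq (map enum_rank [:: a; b; x; y]) by rewrite (map_inj_uniq enum_rank_inj).
have Ut : uniq [:: i0; i1; i2; i3] by rewrite /= !inE !th_eq v0 v1 v2 v3.
have [p hp] := perm_seq U' Ut erefl.
move: hp => /= [fa fb fx fy].
pose f := fun u => p (enum_rank u).
have finj : injective f by move=> u v /perm_inj /enum_rank_inj.
have fa' : f a = i0 by []. have fb' : f b = i1 by [].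
have fx' : f x = i2 by []. have fy' : f y = i3 by [].
exists f; split.
  by apply: inj_card_bij finj _; rewrite card_ord.
apply: (transfer gs gi (@th_sym _) (@th_irr _) finj hd (th_dom n4 v0 v1 v2 v3) fa' fb').
  by move=> u; rewrite (th_A n4 v0 v1 v2 v3) hAc -fa' -fb' !(inj_eq finj).
by move=> u; rewrite (th_B n4 v0 v1 v2 v3) Be !in_set2 -fx' -fy' !(inj_eq finj).
Qed.

Lemma iso_eq (T : finType) (g : rel T) (i0 i1 i2 i3 : 'I_#|T|) :
  symmetric g -> irreflexive g -> connected_graph g -> #|edges g| = #|T|.+1 ->
  forall (Hn : 3 < #|T|), val i0 = 0 -> val i1 = 1 -> val i2 = 2 -> val i3 = 3 ->
  isomorphic g (theta_adj #|T|) -> avm g = avm (theta_adj #|T|).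
Proof.
move=> gs gi conn hE Hn v0 v1 v2 v3 [f [fbij hf]].
have finj := bij_inj fbij; case: fbij => f' fK f'K.
pose a := f' i0; pose b := f' i1.
have fa : f a = i0 by rewrite /a f'K. have fb : f b = i1 by rewrite /b f'K.
have thd := th_dom Hn v0 v1 v2 v3.
have hd : domP g a b.
  split; first by rewrite -hf fa fb; case: thd.
  move=> u v; rewrite -hf; case: thd => _ H /H.
  by rewrite -fa -fb !(inj_eq finj).
have Bsub : nbr g b a \subset [set f' i2; f' i3].
  apply/subsetP => c; rewrite inE -hf fb => /andP [h ca].
  have : f c \in nbr (theta_adj #|T|) i1 i0 by rewrite inE h -fa (inj_eq finj).
  by rewrite (th_B Hn v0 v1 v2 v3) in_set2 => /orP [] /eqP <-; rewrite fK ?set21 ?set22.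
have Ble : #|nbr g b a| <= 2.
  apply: leq_trans (subset_leq_card Bsub) _; rewrite cards2; by case: (_ != _).
have [s1 s2 _] := struct_cards gs gi conn hE hd.
have h4 : #|nbr g a b :&: nbr g b a| <= #|nbr g b a| by apply/subset_leq_card/subsetIr.
have h5 : #|nbr g a b :&: nbr g b a| <= #|nbr g a b| by apply/subset_leq_card/subsetIl.
rewrite (avm_dom gs gi hd); [|lia|lia].
rewrite (th_avm Hn v0 v1 v2 v3) /Kd.
have eB : #|nbr g b a| = 2 by lia.
have eA : #|nbr g a b| = #|T| - 2 by lia.
by rewrite eA eB s2.
Qed.

Theorem theorem2p1 (T : finType) (g : rel T) :
  simple_graph g -> connected_graph g ->
  #|edges g| = #|T|.+1 ->
  (exists p q l, classA g p q l) ->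
  (avm (theta_adj #|T|) <= avm g)%R /\
  (avm g = avm (theta_adj #|T|) <-> isomorphic g (theta_adj #|T|)).
Proof.
move=> [gs gi] conn hE _.
have ne : 0 < #|edges g| by rewrite hE.
case: (boolP [exists a, exists b, domb g a b]) => [/existsP [a /existsP [b /dombP hd]] | nd'].
  have [s1 s2 s3] := struct_cards gs gi conn hE hd.
  have h4 : #|nbr g a b :&: nbr g b a| <= #|nbr g b a| by apply/subset_leq_card/subsetIr.
  have h5 : #|nbr g a b :&: nbr g b a| <= #|nbr g a b| by apply/subset_leq_card/subsetIl.
  have n4 : 3 < #|T| by lia.
  have [i0 [i1 [i2 [i3 [v0 v1 v2 v3]]]]] := ords n4.
  have eqT := th_avm n4 v0 v1 v2 v3.
  have eqG := avm_dom gs gi hd (ltac:(lia)) (ltac:(lia)).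
  split.
    rewrite eqT eqG; apply: ratle; rewrite /Kd s2; nia.
  split; last exact: iso_eq gs gi conn hE n4 v0 v1 v2 v3.
  rewrite eqG eqT => /rateq; rewrite /Kd s2 => hK.
  case: (#|nbr g b a| =P 2) => [B2|Bn2].
    have sub : nbr g b a \subset nbr g a b.
      by apply/setIidPr/eqP; rewrite eqEcard subsetIr s2 B2 leqnn.
    exact: iso_build gs gi hd sub s3 B2.
  have A2 : #|nbr g a b| = 2 by nia.
  have sub : nbr g a b \subset nbr g b a.
    by apply/setIidPr/eqP; rewrite eqEcard subsetIr setIC s2 A2 leqnn.
  have cov : nbr g b a :|: nbr g a b = ~: [set b; a] by rewrite setUC s3 set2C'.
  exact: iso_build gs gi (domP_sym gs hd) sub cov A2.
have nd : forall a b, ~ domP g a b.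
  move=> a b /dombP h; case/negP: nd'; apply/existsP; exists a; apply/existsP; exists b; exact: h.
have n4 := n4_nodom gs gi nd ne.
have [i0 [i1 [i2 [i3 [v0 v1 v2 v3]]]]] := ords n4.
have eqT := th_avm n4 v0 v1 v2 v3.
have hge := avm_ge2 nd ne.
have hlt := ratlt2 ((#|T| - 2) * 2 - 2).
rewrite -eqT in hlt.
split.
  exact: le_trans (ltW hlt) hge.
split; last exact: iso_eq gs gi conn hE n4 v0 v1 v2 v3.
move=> e; rewrite e in hge.
by have := lt_le_trans hlt hge; rewrite ltxx.
Qed.
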